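(* Let $0\le t_1<t_2<+\infty$, $r:=\frac{t_2-t_1}2$, $x_0:=\frac{t_1+t_2}2$. For all $z$ with $\operatorname{Im}z\ge0$: $\omega(z,[t_1,t_2])\le1$ if $z\in D(x_0,r)\cup\{t_1,t_2\}$; $\omega(z,[t_1,t_2])\le\frac12$ if $\operatorname{Im}z>0$ and $|z-x_0|=r$; and $\omega(z,[t_1,t_2])\le\frac1\pi\arctan\frac{2r|z-x_0|}{|z-x_0|^2-r^2}$ if $|z-x_0|>r$. These bounds are sharp on each semicircle: for every $t\ge0$ there is a point $z$ with $\operatorname{Im}z\ge0$, $|z-x_0|=t$, at which equality holds in the applicable bound. Moreover, for all $z$ with $\operatorname{Im}z>0$ and $|z-x_0|<r$, $$\omega(z,[t_1,t_2])\ge1-\frac1\pi\arctan\frac{2r|z-x_0|}{r^2-|z-x_0|^2}\ge1-\frac1\pi\frac{2r|z-x_0|}{r^2-|z-x_0|^2}.$$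
   Context: For $z$ with $\operatorname{Im}z>0$ and Borel $B\subset\mathbb{R}$, $\omega(z,B)=\frac1\pi\int_B\frac{\operatorname{Im}z}{(t-\operatorname{Re}z)^2+(\operatorname{Im}z)^2}dt$ is the harmonic measure of the upper half-plane; for $x\in\mathbb{R}$, $\omega(x,B)$ is the Dirac measure $\delta_x(B)$. $D(x_0,r)$ is the open disc of centre $x_0$ and radius $r$. *)

(* Defs.v *)
From Stdlib Require Import Reals Lra.
From Coquelicot Require Import Coquelicot.
Open Scope R_scope.

(* Points z of the closed upper half-plane are represented by z = x + i y
   with y >= 0.  Harmonic measure of the upper half-plane of the interval
   [a,b] seen from z:
   - if Im z = y > 0 : (1/pi) * int_a^b y / ((t - x)^2 + y^2) dt
     (Poisson integral; the integrand is continuous on [a,b], so the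
      Riemann integral RInt coincides with the Lebesgue integral);
   - if Im z = y = 0 : the Dirac measure delta_x([a,b]).
   (Values for y < 0 are never used.) *)
Definition omega_int (x y a b : R) : R :=
  if Rlt_dec 0 y then
    / PI * RInt (fun t => y / ((t - x) ^ 2 + y ^ 2)) a b
  else if Rle_dec a x then (if Rle_dec x b then 1 else 0) else 0.

Definition cmod_shift (x y x0 : R) : R := sqrt ((x - x0) ^ 2 + y ^ 2).

(* Main.v *)
Require Import Defs.
From Stdlib Require Import Reals Lra.
From Coquelicot Require Import Coquelicot.
Open Scope R_scope.

Lemma atan_le_id x : 0 <= x -> atan x <= x.
Proof.
intros Hx. destruct (Req_dec x 0) as [->|Hn]. rewrite atan_0; lra.
destruct (MVT_cor1 atan 0 x derivable_pt_atan) as [c [Hc Hc2]]. lra.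
rewrite derive_pt_atan, atan_0 in Hc.
assert (1 / (1 + c²) <= 1).
{ unfold Rsqr. assert (0 <= c*c) by nra.
  apply (Rmult_le_reg_r (1 + c*c)). lra. field_simplify; lra. }
nra.
Qed.

Lemma is_RInt_poisson x y a b : 0 < y ->
  is_RInt (fun t => y / ((t - x) ^ 2 + y ^ 2)) a b
    (atan ((b - x) / y) - atan ((a - x) / y)).
Proof.
intros Hy.
apply (is_RInt_derive (fun t => atan ((t - x) / y))).
- intros t _.
  pose proof (derivable_pt_lim_atan ((t - x) / y)) as H.
  apply is_derive_Reals in H.
  evar (d : R).
  assert (Hd : is_derive (fun t0 => (t0 - x) / y) t d).
  { unfold d. auto_derive. easy. reflexivity. }
  replace (y / ((t - x) ^ 2 + y ^ 2)) with (scal d (/ (1 + ((t - x) / y) ^ 2))).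
  apply (is_derive_comp atan (fun t0 => (t0 - x) / y)); auto.
  unfold d, scal; simpl; unfold mult; simpl.
  assert (E1: (t - x) * ((t - x) * 1) + y * (y * 1) = (t-x)^2+y^2) by ring.
  assert (E2: (t - x) / y * ((t - x) / y * 1) = ((t-x)/y)^2) by ring.
  rewrite E1, E2.
  pose proof (pow2_ge_0 (t-x)). pose proof (pow2_ge_0 ((t-x)/y)).
  pose proof (pow_lt y 2 Hy).
  field. repeat split; lra.
- intros t _. apply (ex_derive_continuous (fun t => y / ((t - x) ^ 2 + y ^ 2))). auto_derive. pose proof (pow2_ge_0 (t-x)). pose proof (pow_lt y 2 Hy). lra.
Qed.

Lemma atan_nonneg A : 0 <= A -> 0 <= atan A.
Proof. intros H. destruct (Req_dec A 0) as [->|]. rewrite atan_0; lra.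
rewrite <- atan_0. left. apply atan_increasing. lra. Qed.

Lemma atan_nonpos A : A <= 0 -> atan A <= 0.
Proof. intros H. destruct (Req_dec A 0) as [->|]. rewrite atan_0; lra.
rewrite <- atan_0. left. apply atan_increasing. lra. Qed.

Lemma atan_pos_bound A B : 0 < A -> 0 < B -> A * B < 1 -> atan A + atan B < PI / 2.
Proof. intros HA HB H.
assert (B < / A). { apply (Rmult_lt_reg_l A). lra. rewrite Rinv_r; lra. }
pose proof (atan_increasing _ _ H0). rewrite atan_inv in H1; lra. Qed.

Lemma atan_add A B : A * B < 1 -> atan A + atan B = atan ((A + B) / (1 - A * B)).
Proof.
intros H.
assert (Hb : - (PI / 2) < atan A + atan B < PI / 2).
{ pose proof (atan_bound A). pose proof (atan_bound B).
  destruct (Rlt_dec 0 A), (Rlt_dec 0 B).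
  - pose proof (atan_pos_bound A B r r0 H). pose proof (atan_nonneg A). pose proof (atan_nonneg B). lra.
  - pose proof (atan_nonneg A). pose proof (atan_nonpos B). lra.
  - pose proof (atan_nonneg B). pose proof (atan_nonpos A). lra.
  - destruct (Req_dec A 0) as [->|]. rewrite atan_0. lra.
    destruct (Req_dec B 0) as [->|]. rewrite atan_0. lra.
    pose proof (atan_pos_bound (-A) (-B)) as K. rewrite !atan_opp in K.
    assert (- atan A + - atan B < PI / 2) by (apply K; nra).
    pose proof (atan_nonpos A). pose proof (atan_nonpos B). lra. }
pose proof (atan_bound A). pose proof (atan_bound B).
rewrite <- (atan_tan (atan A + atan B)) by lra. f_equal.
rewrite tan_plus, !tan_atan; auto.
- apply Rgt_not_eq, cos_gt_0; lra.
- apply Rgt_not_eq, cos_gt_0; lra.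
- apply Rgt_not_eq, cos_gt_0; lra.
- rewrite !tan_atan. lra.
Qed.

Lemma omega_pos x y a b : 0 < y ->
  omega_int x y a b = / PI * (atan ((b - x) / y) + atan ((x - a) / y)).
Proof.
intros Hy. unfold omega_int. destruct (Rlt_dec 0 y); [|lra].
rewrite (is_RInt_unique _ _ _ _ (is_RInt_poisson x y a b Hy)).
replace ((a - x) / y) with (- ((x - a) / y)) by (field; lra).
rewrite atan_opp. ring.
Qed.

Section G.
Variables t1 t2 x y : R.
Hypothesis h12 : t1 < t2.
Hypothesis Hy : 0 < y.
Let r := (t2 - t1) / 2.
Let x0 := (t1 + t2) / 2.
Let p2 := (x - x0) ^ 2 + y ^ 2.

Lemma prodAB : (t2 - x) / y * ((x - t1) / y) = (r ^ 2 - (x - x0) ^ 2) / y ^ 2.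
Proof. unfold r, x0. field. lra. Qed.

Lemma sum_out : r ^ 2 < p2 ->
  atan ((t2 - x) / y) + atan ((x - t1) / y) = atan (2 * r * y / (p2 - r ^ 2)).
Proof.
intros H. unfold p2 in *. rewrite atan_add.
- f_equal. unfold r, x0 in *. field. split; lra.
- rewrite prodAB. pose proof (pow_lt y 2 Hy).
  apply (Rmult_lt_reg_r (y^2)); auto. field_simplify; lra.
Qed.

Lemma sum_in : p2 < r ^ 2 ->
  atan ((t2 - x) / y) + atan ((x - t1) / y) = PI - atan (2 * r * y / (r ^ 2 - p2)).
Proof.
intros H. unfold p2 in *.
set (A := (t2 - x) / y). set (B := (x - t1) / y).
pose proof (pow_lt y 2 Hy).
assert (HAB : A * B > 1).
{ unfold A, B. rewrite prodAB. apply (Rmult_lt_reg_r (y^2)); auto. field_simplify; lra. }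
assert (HS : A + B = 2 * r / y). { unfold A, B, r. field. lra. }
assert (0 < r) by (unfold r; lra).
assert (0 < 2 * r / y) by (apply Rdiv_lt_0_compat; lra).
assert (A > 0 /\ B > 0) as [HA HB] by (split; nra).
assert (E : forall C, 0 < C -> atan C = PI / 2 - atan (/ C)).
{ intros C HC. rewrite <- (Rinv_inv C) at 1. rewrite atan_inv. lra. apply Rinv_0_lt_compat; lra. }
rewrite (E A HA), (E B HB).
assert (/ A * / B < 1).
{ rewrite <- Rinv_mult. apply (Rmult_lt_reg_l (A*B)). nra. rewrite Rinv_r. lra. nra. }
replace (PI / 2 - atan (/ A) + (PI / 2 - atan (/ B))) with (PI - (atan (/ A) + atan (/ B))) by lra.
rewrite atan_add by auto. do 2 f_equal.
assert (Hp : A * B = (r ^ 2 - (x - x0) ^ 2) / y ^ 2) by (unfold A, B; apply prodAB).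
replace ((/ A + / B) / (1 - / A * / B)) with ((A + B) / (A * B - 1)) by (field; lra).
rewrite HS, Hp. field. split; lra.
Qed.

Lemma sum_circ : p2 = r ^ 2 ->
  atan ((t2 - x) / y) + atan ((x - t1) / y) = PI / 2.
Proof.
intros H. unfold p2 in *.
set (A := (t2 - x) / y). set (B := (x - t1) / y).
pose proof (pow_lt y 2 Hy).
assert (HAB : A * B = 1).
{ unfold A, B. rewrite prodAB. replace (r ^ 2 - (x - x0) ^ 2) with (y ^ 2) by lra. field. lra. }
assert (HS : A + B = 2 * r / y). { unfold A, B, r. field. lra. }
assert (0 < r) by (unfold r; lra).
assert (0 < 2 * r / y) by (apply Rdiv_lt_0_compat; lra).
assert (HA : A > 0).
{ destruct (Rle_lt_dec A 0); [|lra]. assert (B > 0) by lra. nra. }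
assert (HB : B > 0).
{ destruct (Rle_lt_dec B 0); [|lra]. assert (A > 0) by lra. nra. }
replace B with (/ A) by (field_simplify; try lra; apply (Rmult_eq_reg_l A); [field_simplify; lra|lra]).
rewrite atan_inv; lra.
Qed.
End G.

Lemma atan_le_mono a b : a <= b -> atan a <= atan b.
Proof. intros [H|H]. left; apply atan_increasing; auto. subst; lra. Qed.

Lemma div_mono r y p D : 0 < r -> y <= p -> 0 < D -> 2 * r * y / D <= 2 * r * p / D.
Proof. intros. unfold Rdiv. apply Rmult_le_compat_r. left; apply Rinv_0_lt_compat; lra. nra. Qed.

Lemma cmod_sq x y x0 : cmod_shift x y x0 ^ 2 = (x - x0) ^ 2 + y ^ 2.
Proof. unfold cmod_shift. apply pow2_sqrt. pose proof (pow2_ge_0 (x-x0)). pose proof (pow2_ge_0 y). lra. Qed.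

Lemma cmod_ge0 x y x0 : 0 <= cmod_shift x y x0.
Proof. unfold cmod_shift. apply sqrt_pos. Qed.

Lemma cmod_ge_y x y x0 : 0 <= y -> y <= cmod_shift x y x0.
Proof. intros. pose proof (cmod_sq x y x0). pose proof (cmod_ge0 x y x0).
pose proof (pow2_ge_0 (x-x0)). nra. Qed.

Lemma omega_le1 x y a b : 0 <= y -> omega_int x y a b <= 1.
Proof. intros Hy. destruct (Rlt_dec 0 y).
- rewrite omega_pos by auto. pose proof (atan_bound ((b - x) / y)). pose proof (atan_bound ((x - a) / y)).
  pose proof PI_RGT_0. apply (Rmult_le_reg_l PI); auto. rewrite <- Rmult_assoc, Rinv_r by lra. lra.
- unfold omega_int. destruct (Rlt_dec 0 y); [lra|]. destruct Rle_dec; [destruct Rle_dec|]; lra.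
Qed.

Theorem proposition9 (t1 t2 : R) (h1 : 0 <= t1) (h12 : t1 < t2) :
  let r := (t2 - t1) / 2 in
  let x0 := (t1 + t2) / 2 in
  (* upper bounds, for all z = x + i y with y >= 0 *)
  (forall x y : R, 0 <= y ->
     ((cmod_shift x y x0 < r \/ (x = t1 /\ y = 0) \/ (x = t2 /\ y = 0)) ->
        omega_int x y t1 t2 <= 1) /\
     ((0 < y /\ cmod_shift x y x0 = r) ->
        omega_int x y t1 t2 <= 1 / 2) /\
     (r < cmod_shift x y x0 ->
        omega_int x y t1 t2 <=
          / PI * atan (2 * r * cmod_shift x y x0 / (cmod_shift x y x0 ^ 2 - r ^ 2)))) /\
  (* sharpness on every semicircle |z - x0| = t *)
  (forall t : R, 0 <= t ->
     exists x y : R, 0 <= y /\ cmod_shift x y x0 = t /\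
       (((cmod_shift x y x0 < r \/ (x = t1 /\ y = 0) \/ (x = t2 /\ y = 0)) /\
            omega_int x y t1 t2 = 1) \/
        ((0 < y /\ cmod_shift x y x0 = r) /\ omega_int x y t1 t2 = 1 / 2) \/
        (r < cmod_shift x y x0 /\
            omega_int x y t1 t2 =
              / PI * atan (2 * r * cmod_shift x y x0 / (cmod_shift x y x0 ^ 2 - r ^ 2))))) /\
  (* lower bounds inside the disc *)
  (forall x y : R, 0 < y -> cmod_shift x y x0 < r ->
     1 - / PI * atan (2 * r * cmod_shift x y x0 / (r ^ 2 - cmod_shift x y x0 ^ 2))
       <= omega_int x y t1 t2 /\
     1 - / PI * (2 * r * cmod_shift x y x0 / (r ^ 2 - cmod_shift x y x0 ^ 2))
       <= 1 - / PI * atan (2 * r * cmod_shift x y x0 / (r ^ 2 - cmod_shift x y x0 ^ 2))).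
Proof.
intros r x0.
assert (Hr : 0 < r) by (unfold r; lra).
pose proof PI_RGT_0 as HPI.
assert (HiPI : 0 < / PI) by (apply Rinv_0_lt_compat; lra).
assert (Hcm : forall t, 0 <= t -> forall x y, x - x0 = 0 /\ y = t \/ x - x0 = t /\ y = 0 ->
   cmod_shift x y x0 = t).
{ intros t Ht x y H. unfold cmod_shift.
  replace ((x - x0) ^ 2 + y ^ 2) with (t ^ 2) by (destruct H as [[-> ->]|[-> ->]]; ring).
  apply sqrt_pow2; auto. }
split; [|split].
- intros x y Hy. pose proof (cmod_sq x y x0) as Hsq. pose proof (cmod_ge0 x y x0).
  pose proof (cmod_ge_y x y x0 Hy).
  split; [|split].
  + intros _. apply omega_le1; auto.
  + intros [Hy' Hc]. rewrite omega_pos by auto.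
    rewrite (sum_circ t1 t2 x y h12 Hy'). right. field. lra.
    fold x0 r. rewrite <- Hsq, Hc. reflexivity.
  + intros Hc. destruct (Rlt_dec 0 y) as [Hy'|Hy'].
    * rewrite omega_pos by auto.
      rewrite (sum_out t1 t2 x y Hy'); fold x0 r; rewrite <- Hsq.
      apply Rmult_le_compat_l. lra. apply atan_le_mono. apply div_mono; auto. nra.
      nra.
    * assert (y = 0) by lra. subst y.
      unfold omega_int. destruct (Rlt_dec 0 0); [lra|].
      assert (0 <= atan (2 * r * cmod_shift x 0 x0 / (cmod_shift x 0 x0 ^ 2 - r ^ 2))).
      { apply atan_nonneg. unfold Rdiv. apply Rmult_le_pos. nra. left; apply Rinv_0_lt_compat. nra. }
      assert (0 <= / PI * atan (2 * r * cmod_shift x 0 x0 / (cmod_shift x 0 x0 ^ 2 - r ^ 2))) by nra.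
      destruct Rle_dec; [destruct Rle_dec|]; try lra.
      exfalso. unfold r, x0 in *. nra.
- intros t Ht. destruct (Rlt_le_dec t r) as [Htr|Htr].
  + exists (x0 + t), 0. assert (Hc : cmod_shift (x0 + t) 0 x0 = t) by (apply Hcm; auto; right; split; ring).
    split; [lra|split; auto]. left. rewrite Hc. split; auto.
    unfold omega_int. destruct (Rlt_dec 0 0); [lra|].
    destruct Rle_dec; [destruct Rle_dec|]; try lra; exfalso; unfold r, x0 in *; lra.
  + destruct Htr as [Htr|Htr].
    * exists x0, t. assert (Hc : cmod_shift x0 t x0 = t) by (apply Hcm; auto; left; split; ring).
      split; [lra|split; auto]. right; right. rewrite Hc. split; auto.
      rewrite omega_pos by lra. rewrite (sum_out t1 t2 x0 t) by (fold x0 r; nra).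
      fold x0 r. do 3 f_equal. ring.
    * subst t. exists x0, r. assert (Hc : cmod_shift x0 r x0 = r) by (apply Hcm; auto; lra).
      split; [lra|split; auto]. right; left. split; auto.
      rewrite omega_pos by lra. rewrite (sum_circ t1 t2 x0 r h12) by (fold x0 r; try lra; ring).
      field. lra.
- intros x y Hy Hc. pose proof (cmod_sq x y x0) as Hsq. pose proof (cmod_ge0 x y x0).
  pose proof (cmod_ge_y x y x0 (Rlt_le _ _ Hy)).
  assert (Hpos : 0 <= 2 * r * cmod_shift x y x0 / (r ^ 2 - cmod_shift x y x0 ^ 2)).
  { unfold Rdiv. apply Rmult_le_pos. nra. left; apply Rinv_0_lt_compat. nra. }
  split.
  + rewrite omega_pos by auto.
    rewrite (sum_in t1 t2 x y h12 Hy); fold x0 r; [|nra].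
    rewrite <- Hsq.
    assert (atan (2 * r * y / (r ^ 2 - cmod_shift x y x0 ^ 2)) <=
            atan (2 * r * cmod_shift x y x0 / (r ^ 2 - cmod_shift x y x0 ^ 2))).
    { apply atan_le_mono, div_mono; auto. nra. }
    rewrite Rmult_minus_distr_l, Rinv_l by lra. nra.
  + pose proof (atan_le_id _ Hpos). nra.
Qed.
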